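(* Let $n\in\mathbb{N}$, $p\in(0,1)$, $q=1-p$, and let $G\in\mathcal{G}(n,p)$ with algebraic connectivity $\lambda_2$. Then \[ \max\{np-\sqrt{2n(n-2)pq},\,0\}\le \mathbb{E}[\lambda_2]\le np. \]
   Context: $\mathcal{G}(n,p)$ denotes the Erdős–Rényi model: a simple undirected graph on nodes $[n]$ in which each possible edge is present independently with probability $p$. The Laplacian is $L=D-A$ (degree matrix minus adjacency matrix); its eigenvalues are $0=\lambda_1\le\lambda_2\le\dots\le\lambda_n$, and the algebraic connectivity of $G$ is $\lambda_2(L)$. *)

(* Defs.v *)
From HB Require Import structures.
From mathcomp Require Import all_boot all_order all_algebra.
From mathcomp Require Import reals.
From Stdlib Require Import ClassicalEpsilon.
Set Implicit Arguments. Unset Strict Implicit. Unset Printing Implicit Defensive.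
Import Order.TTheory GRing.Theory Num.Theory.
Local Open Scope ring_scope.

(* Potential edges of a simple graph on [n] = 'I_n : the 2-element subsets. *)
Definition pairs (n : nat) : {set {set 'I_n}} := [set e : {set 'I_n} | #|e| == 2%N].

(* A simple graph on 'I_n is an edge set E with E \subset pairs n. *)
Definition adj (n : nat) (E : {set {set 'I_n}}) (i j : 'I_n) : bool :=
  (i != j) && ([set i; j] \in E).

Definition laplacian (R : pzRingType) (n : nat) (E : {set {set 'I_n}}) : 'M[R]_n :=
  \matrix_(i, j) ((if i == j then (#|[set k | adj E i k]|)%:R else 0)
                  - (adj E i j)%:R).

Definition is_sorted_spectrum (R : realType) (n : nat) (M : 'M[R]_n) (s : seq R) : Prop :=
  sorted <=%R s /\ char_poly M = \prod_(x <- s) ('X - x%:P).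

Definition sorted_spectrum (R : realType) (n : nat) (M : 'M[R]_n) : seq R :=
  epsilon (inhabits [::]) (is_sorted_spectrum M).

(* lambda_k (1-indexed) *)
Definition eigen_k (R : realType) (n : nat) (M : 'M[R]_n) (k : nat) : R :=
  nth 0 (sorted_spectrum M) k.-1.

Definition alg_conn (R : realType) (n : nat) (E : {set {set 'I_n}}) : R :=
  eigen_k (laplacian R E) 2.

Definition gnp_prob (R : realType) (n : nat) (p : R) (E : {set {set 'I_n}}) : R :=
  if E \subset pairs n then p ^+ #|E| * (1 - p) ^+ (#|pairs n| - #|E|) else 0.

Definition gnp_expect (R : realType) (n : nat) (p : R) (f : {set {set 'I_n}} -> R) : R :=
  \sum_(E : {set {set 'I_n}}) gnp_prob p E * f E.

(* Main.v *)
Require Import Defs.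
From HB Require Import structures.
From mathcomp Require Import all_boot all_order all_algebra.
From mathcomp Require Import reals.
From mathcomp Require Import complex ring lra.
From Stdlib Require Import ClassicalEpsilon.
Set Implicit Arguments. Unset Strict Implicit. Unset Printing Implicit Defensive.
Import Order.TTheory GRing.Theory Num.Theory.
Local Open Scope ring_scope.

Section Sim.
Variable (F : fieldType) (n : nat).
Lemma char_poly_sim (P D : 'M[F]_n) : P \in unitmx ->
  char_poly (invmx P *m D *m P) = char_poly D.
Proof.
move=> Pu.
set Q := map_mx polyC P; set Qi := map_mx polyC (invmx P).
have QiQ : Qi *m Q = 1%:M by rewrite -map_mxM mulVmx // map_mx1.
have QQi : Q *m Qi = 1%:M by rewrite -map_mxM mulmxV // map_mx1.
have E : char_poly_mx (invmx P *m D *m P) = Qi *m char_poly_mx D *m Q.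
  rewrite /char_poly_mx !map_mxM mulmxBr mulmxBl -/Q -/Qi; congr (_ - _).
  by rewrite -mulmxA -scalar_mxC mulmxA QiQ mul1mx.
rewrite /char_poly E !det_mulmx mulrC mulrA -det_mulmx QQi det1 mul1r.
by [].
Qed.
End Sim.

Section SymSpec.
Variable (R : rcfType) (n : nat).
Local Notation toC := (real_complex R).

Lemma trace_map (A : 'M[R]_n) : \tr (map_mx toC A) = toC (\tr A).
Proof. by rewrite /mxtrace rmorph_sum; apply: eq_bigr => i _; rewrite mxE. Qed.

Lemma sym_spectrum (A : 'M[R]_n) : A^T = A ->
  exists r : seq R, [/\ size r = n, char_poly A = \prod_(x <- r) ('X - x%:P),
     \sum_(x <- r) x = \tr A & \sum_(x <- r) x ^+ 2 = \tr (A *m A)].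
Proof.
move=> Asym.
set AC := map_mx toC A.
have herm : AC \is hermsymmx.
  apply: realsym_hermsym.
    apply/is_hermitianmxP; rewrite expr0 scale1r.
    by apply/matrixP => i j; rewrite /AC !mxE /= -{1}Asym mxE.
  by apply/mxOverP => i j; rewrite mxE; apply/complex_realP; eexists.
have /orthomx_spectralP AE := hermitian_normalmx herm.
have dreal := hermitian_spectral_diag_real herm.
set P := spectralmx AC in AE; set d := spectral_diag AC in AE dreal.
have Pu : P \in unitmx by apply: spectral_unit.
have dE i : d 0 i = toC (complex.Re (d 0 i)).
  by apply/esym/RRe_real; move/mxOverP: dreal; apply.
exists [seq complex.Re (d 0 i) | i <- enum 'I_n]; split.
- by rewrite size_map size_enum_ord.
- apply: (@map_poly_inj _ _ toC).
  rewrite map_char_poly -/AC AE char_poly_sim // char_poly_trig ?diag_mx_is_trig //.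
  rewrite rmorph_prod big_map big_enum /=; apply: eq_bigr => i _.
  by rewrite map_polyXsubC mxE eqxx mulr1n {1}dE.
- apply: (@complexI R); rewrite -trace_map -/AC AE.
  rewrite mxtrace_mulC mulmxA mulmxV // mul1mx mxtrace_diag rmorph_sum big_map big_enum /=.
  by apply: eq_bigr => i _; rewrite -dE.
- apply: (@complexI R).
  rewrite -[X in _ = X]trace_map map_mxM -/AC AE.
  have -> : invmx P *m diag_mx d *m P *m (invmx P *m diag_mx d *m P) =
    invmx P *m (diag_mx d *m diag_mx d) *m P.
    by rewrite !mulmxA -(mulmxA _ P) mulmxV // mulmx1.
  rewrite mxtrace_mulC [P *m _]mulmxA mulmxV // mul1mx mulmx_diag mxtrace_diag rmorph_sum big_map big_enum /=.
  apply: eq_bigr => i _; rewrite mxE; move: (dE i); set z := complex.Re _ => ->.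
  by rewrite expr2 (rmorphM toC).
Qed.
End SymSpec.

Section Lap.
Variable (R : realType) (n : nat) (E : {set {set 'I_n}}).
Local Notation a i j := ((adj E i j)%:R : R).
Local Notation L := (laplacian R E).

Lemma adjC i j : adj E i j = adj E j i.
Proof. by rewrite /adj eq_sym setUC. Qed.

Lemma adjii i : adj E i i = false.
Proof. by rewrite /adj eqxx. Qed.

Lemma degE i : (#|[set k | adj E i k]|)%:R = \sum_j a i j :> R.
Proof.
rewrite -sum1dep_card natr_sum [RHS](bigID (fun j => adj E i j)) /=.
rewrite [X in _ = _ + X]big1 ?addr0; last by move=> j /negbTE ->.
by apply: eq_bigr => j ->.
Qed.

Lemma lapE i j : L i j = (i == j)%:R * \sum_k a i k - a i j.
Proof. by rewrite mxE degE; case: eqP => _; rewrite ?mul1r ?mul0r. Qed.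

Lemma lap_sym : L^T = L.
Proof.
apply/matrixP => i j; rewrite mxE !lapE; case: (eqVneq i j) => [->|ne] //.
by rewrite !mul0r adjC.
Qed.

Lemma lap_trace : \tr L = \sum_i \sum_j a i j.
Proof.
by apply: eq_bigr => i _; rewrite lapE eqxx mul1r adjii subr0.
Qed.

Lemma a_sq i j : a i j * a i j = a i j.
Proof. by case: adj; rewrite ?mulr0 ?mulr1. Qed.

Lemma lap_trace2 : \tr (L *m L) = \sum_i ((\sum_j a i j) ^+ 2 + \sum_j a i j).
Proof.
apply: eq_bigr => i _; rewrite mxE.
rewrite (bigD1 i) //= !lapE eqxx mul1r adjii subr0.
under eq_bigr => j /negbTE ji do rewrite !lapE [i == j]eq_sym ji !mul0r !sub0r mulrNN [adj E j i]adjC a_sq.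
rewrite expr2; congr (_ + _).
by rewrite [in RHS](bigD1 i) //= adjii add0r.
Qed.

Lemma lap_ones : (const_mx 1 : 'rV[R]_n) *m L = 0.
Proof.
apply/rowP => j; rewrite !mxE.
under eq_bigr => i _ do rewrite mxE mul1r lapE.
rewrite sumrB [X in X - _](bigD1 j) //= eqxx mul1r [X in _ + X - _]big1 ?addr0; last first.
  by move=> i ne; rewrite (negbTE ne) mul0r.
by apply/eqP; rewrite subr_eq0; apply/eqP; apply: eq_bigr => i _; rewrite adjC.
Qed.

Lemma lap_quad (v : 'rV[R]_n) : \sum_j (v *m L) 0 j * v 0 j =
  \sum_i \sum_j (a i j * v 0 i ^+ 2 - a i j * (v 0 i * v 0 j)).
Proof.
under eq_bigr => j _ do rewrite mxE mulr_suml.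
rewrite exchange_big /=; apply: eq_bigr => i _.
under eq_bigr => j _ do rewrite lapE mulrBr mulrBl.
rewrite sumrB [X in X - _](bigD1 i) //= eqxx mul1r [X in _ + X - _]big1 ?addr0; last first.
  by move=> j ne; rewrite eq_sym (negbTE ne) mul0r mulr0 mul0r.
rewrite sumrB mulr_sumr mulr_suml; congr (_ - _).
  by apply: eq_bigr => j _; rewrite expr2; ring.
by apply: eq_bigr => j _; ring.
Qed.

Lemma lap_psd (v : 'rV[R]_n) : 0 <= \sum_j (v *m L) 0 j * v 0 j.
Proof.
have -> : \sum_j (v *m L) 0 j * v 0 j =
    (\sum_i \sum_j a i j * (v 0 i - v 0 j) ^+ 2) / 2.
  have e : \sum_i \sum_j a i j * (v 0 i - v 0 j) ^+ 2 =
     \sum_i \sum_j (a i j * v 0 i ^+ 2 - a i j * (v 0 i * v 0 j)) +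
     \sum_i \sum_j (a i j * v 0 j ^+ 2 - a i j * (v 0 i * v 0 j)).
    rewrite -big_split; apply: eq_bigr => i _; rewrite -big_split.
    by apply: eq_bigr => j _ /=; ring.
  have e2 : \sum_i \sum_j (a i j * v 0 j ^+ 2 - a i j * (v 0 i * v 0 j)) =
     \sum_i \sum_j (a i j * v 0 i ^+ 2 - a i j * (v 0 i * v 0 j)).
    rewrite exchange_big /=; apply: eq_bigr => i _; apply: eq_bigr => j _.
    by rewrite adjC mulrC [v 0 j * _]mulrC.
  by rewrite e e2 lap_quad; field.
rewrite divr_ge0 //; apply: sumr_ge0 => i _; apply: sumr_ge0 => j _.
by apply: mulr_ge0 => //; rewrite sqr_ge0.
Qed.
End Lap.

Lemma spec_props (R : realType) n (E : {set {set 'I_n}}) : (0 < n)%N ->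
  let L := laplacian R E in let s := sorted_spectrum L in
  [/\ size s = n, sorted <=%R s, (0 : R) \in s, all (fun x => 0 <= x) s &
      (\sum_(x <- s) x = \tr L /\ \sum_(x <- s) x ^+ 2 = \tr (L *m L))].
Proof.
move=> n0 L s.
have [r [sr chr s1 s2]] := sym_spectrum (@lap_sym R n E).
have ex : exists s0, is_sorted_spectrum L s0.
  exists (sort <=%R r); split; first exact: sort_le_sorted.
  by rewrite chr; apply: perm_big; rewrite perm_sym perm_sort.
have [sor chs] : is_sorted_spectrum L s by apply: epsilon_spec.
have pe : perm_eq s r by apply: prod_XsubC_eq; rewrite -chs -chr.
have rootE x : root (char_poly L) x = (x \in s) by rewrite chs root_prod_XsubC.
split => //.
- by rewrite (perm_size pe).
- rewrite -rootE -eigenvalue_root_char; apply/eigenvalueP.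
  exists (const_mx 1); first by rewrite (@lap_ones R n E) scale0r.
  apply/negP => /eqP/rowP/(_ (Ordinal n0)); rewrite !mxE => /eqP.
  by rewrite oner_eq0.
- apply/allP => x; rewrite -rootE -eigenvalue_root_char => /eigenvalueP [v vL vn0].
  have := @lap_psd R n E v; rewrite vL.
  under eq_bigr => j _ do rewrite mxE -mulrA.
  rewrite -mulr_sumr pmulr_lge0 //.
  rewrite lt_def sumr_ge0 ?andbT; last by move=> j _; rewrite -expr2 sqr_ge0.
  apply: contra vn0 => /eqP S0; apply/eqP/rowP => j; rewrite mxE.
  have := psumr_eq0P _ S0 (i := j); rewrite -expr2 => /(_ (fun _ _ => sqr_ge0 _) isT).
  by move/eqP; rewrite sqrf_eq0 => /eqP.
- by split; rewrite (perm_big _ pe).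
Qed.

Section Ineq.
Variable R : realType.

Lemma sum_quad (l : seq R) a b c :
  \sum_(z <- l) (a * z ^+ 2 + b * z + c) =
  a * \sum_(z <- l) z ^+ 2 + b * \sum_(z <- l) z + c * (size l)%:R.
Proof.
elim: l => [|x l IH]; first by rewrite !big_nil /=; ring.
by rewrite !big_cons IH /= mulrS; ring.
Qed.

Lemma seq_ineq (s : seq R) k : size s = k.+2 -> sorted <=%R s ->
  (0 : R) \in s -> all (fun x => 0 <= x) s ->
  let T := \sum_(x <- s) x in let S := \sum_(x <- s) x ^+ 2 in
  let y := nth 0 s 1 in let K := (k.+1)%:R : R in
  [/\ 0 <= y, K * y <= T & (T - K * y) ^+ 2 <= K * (K * S - T ^+ 2)].
Proof.
case: s => [|x1 [|y t]] //= [st] srt s0 pos.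
set T := \sum_(x <- _) x; set S := \sum_(x <- _) x ^+ 2; set K := k.+1%:R.
have := srt; rewrite (path_sortedE le_trans) => /and3P [x1y /seq.allP yle _].
move: pos => /and3P [x1ge yge /seq.allP tge].
have x10 : x1 = 0.
  apply/le_anti; rewrite x1ge andbT.
  move: s0; rewrite !inE => /orP [/eqP -> //|/orP [/eqP -> //|s0]].
  exact: le_trans x1y (yle _ s0).
have eT : T = y + \sum_(z <- t) z by rewrite /T big_cons x10 add0r big_cons.
have eS : S = y ^+ 2 + \sum_(z <- t) z ^+ 2.
  by rewrite /S big_cons x10 expr0n add0r big_cons.
have tK : \sum_(z <- t) y <= \sum_(z <- t) z.
  by rewrite big_seq [X in _ <= X]big_seq; apply: ler_sum => z zt; apply: yle.
have cK : \sum_(z <- t) y = y * k%:R.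
  by have := sum_quad t 0 0 y; rewrite st; under eq_bigr do rewrite !mul0r !add0r; move=> ->; ring.
split => //.
  by rewrite eT /K -addn1 natrD; lra.
have e1 : \sum_(z <- y :: t) (K ^+ 2 * z ^+ 2 + (- 2 * K * T) * z + T ^+ 2) =
   K * (K * S - T ^+ 2).
  rewrite sum_quad /= st big_cons -eS big_cons -eT -/K /K; ring.
have e2 : \sum_(z <- y :: t) (K ^+ 2 * z ^+ 2 + (- 2 * K * T) * z + T ^+ 2) =
   (T - K * y) ^+ 2 + \sum_(z <- t) (K * z - T) ^+ 2.
  rewrite big_cons; congr (_ + _); first ring.
  by apply: eq_bigr => z _; ring.
rewrite -e1 e2 lerDl; apply: sumr_ge0 => z _; exact: sqr_ge0.
Qed.
End Ineq.

Section Prob.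
Variable (R : realType) (n : nat) (p : R).
Local Notation P := (pairs n).
Local Notation w := (@gnp_prob R n p).

Lemma key (S : {set {set 'I_n}}) : S \subset P ->
  \sum_E w E * (S \subset E)%:R = p ^+ #|S|.
Proof.
move=> SP.
pose F t := if t \in P then p else 0.
pose G t := if t \in P then (if t \in S then 0 else 1 - p) else 1.
have h1 : \prod_t (F t + G t) = p ^+ #|S|.
  rewrite -prodr_const [RHS]big_mkcond /=; apply: eq_bigr => t _.
  rewrite /F /G; case: (boolP (t \in S)) => tS.
    by rewrite (subsetP SP _ tS) addr0.
  by case: (t \in P); rewrite ?add0r //; ring.
have h2 (J : {set {set 'I_n}}) : \prod_t (if t \in J then F t else G t) = w J * (S \subset J)%:R.
  rewrite /gnp_prob; case: (boolP (J \subset P)) => JP; last first.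
    have [t tJ tP] := subsetPn JP.
    by rewrite mul0r (bigD1 t) //= tJ /F (negbTE tP) mul0r.
  case: (boolP (S \subset J)) => SJ; last first.
    have [t tS tJ] := subsetPn SJ.
    by rewrite mulr0 (bigD1 t) //= (negbTE tJ) /G (subsetP SP _ tS) tS mul0r.
  rewrite mulr1 (bigID (mem J)) /=.
  have -> : \prod_(t | t \in J) (if t \in J then F t else G t) = p ^+ #|J|.
    rewrite -prodr_const; apply: eq_bigr => t tJ.
    by rewrite tJ /F (subsetP JP _ tJ).
  congr (_ * _).
  have -> : (#|P| - #|J|)%N = #|P :\: J|.
    by rewrite cardsD; congr (_ - _)%N; apply/eq_card => t; rewrite inE andbC; case: (boolP (t \in J)) => // /(subsetP JP) ->.
  rewrite -prodr_const big_mkcond [RHS]big_mkcond /=; apply: eq_bigr => t _.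
  case: (boolP (t \in J)) => tJ; rewrite in_setD tJ //=.
  rewrite /G; case: (t \in P) => //.
  case: (boolP (t \in S)) => [tS|//]; by move: (subsetP SJ t tS); rewrite (negbTE tJ).
rewrite -h1 (bigA_distr 1 +%R) /=.
by apply: eq_bigr => J _; rewrite h2.
Qed.

Lemma w_sum1 : \sum_E w E = 1.
Proof.
have := key (sub0set P); rewrite cards0 expr0 => <-.
by apply: eq_bigr => E _; rewrite sub0set mulr1.
Qed.

Lemma w_ge0 E : 0 <= p <= 1 -> 0 <= w E.
Proof.
move=> /andP [p0 p1]; rewrite /gnp_prob; case: ifP => // _.
by apply: mulr_ge0; apply: exprn_ge0; rewrite ?subr_ge0.
Qed.

Lemma lin (I : finType) (f : I -> {set {set 'I_n}} -> R) :
  \sum_E w E * \sum_i f i E = \sum_i \sum_E w E * f i E.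
Proof. by under eq_bigr do rewrite mulr_sumr; rewrite exchange_big. Qed.

Lemma bnat (b : bool) : b%:R * b%:R = b%:R :> R.
Proof. by case: b; rewrite ?mulr1 ?mulr0. Qed.

Lemma M2 (i j k l : 'I_n) : \sum_E w E * ((adj E i j)%:R * (adj E k l)%:R) =
  (i != j)%:R * (k != l)%:R * (if [set i; j] == [set k; l] then p else p ^+ 2).
Proof.
rewrite /adj; case: (boolP (i != j)) => ij; last first.
  by rewrite /= !mul0r big1 // => E _; rewrite /= !mul0r mulr0.
case: (boolP (k != l)) => kl; last first.
  by rewrite /= !mulr0 !mul0r big1 // => E _; rewrite mulr0 mulr0.
rewrite /= !mul1r.
have sub : [set [set i; j]; [set k; l]] \subset P.
  by rewrite subUset !sub1set !inE !cards2 ij kl.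
rewrite (_ : (if _ then _ else _) = p ^+ #|[set [set i; j]; [set k; l]]|); last first.
  by rewrite cards2; case: eqP.
rewrite -(key sub).
apply: eq_bigr => E _; rewrite subUset !sub1set -natrM mulnb.
by [].
Qed.

Lemma M2' (i j k l : 'I_n) : \sum_E w E * ((adj E i j)%:R * (adj E k l)%:R) =
  (i != j)%:R * (k != l)%:R * p ^+ 2 +
  (p - p ^+ 2) * ((i != j) && ((k != l) && ([set k; l] == [set i; j])))%:R.
Proof.
rewrite M2 [[set k; l] == _]eq_sym; case: (boolP ([set i; j] == [set k; l])) => _; case: (i != j); case: (k != l) => /=; ring.
Qed.

Lemma set2_eq (i j k l : 'I_n) : i != j ->
  ((k != l) && ([set k; l] == [set i; j])) =
  ((k == i) && (l == j)) || ((k == j) && (l == i)).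
Proof.
move=> ij; apply/idP/idP.
  move=> /andP [kl /eqP eq].
  have hk : k \in [set i; j] by rewrite -eq in_set2 eqxx.
  have hl : l \in [set i; j] by rewrite -eq in_set2 eqxx orbT.
  move: hk hl kl; rewrite !in_set2.
  by case/orP => /eqP ->; case/orP => /eqP ->; rewrite ?eqxx //= ?andbT ?orbT.
case/orP => /andP [/eqP -> /eqP ->]; first by rewrite ij eqxx.
by rewrite eq_sym ij setUC eqxx.
Qed.

Lemma negR (b : bool) : (~~ b)%:R = 1 - b%:R :> R.
Proof. by case: b => /=; rewrite ?subr0 ?subrr. Qed.

Lemma count1 (i : 'I_n) : \sum_j (i != j)%:R = n%:R - 1 :> R.
Proof.
under eq_bigr => j _ do rewrite negR.
rewrite sumrB sumr_const card_ord (bigD1 i) //= eqxx big1 ?addr0 //.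
by move=> j ji; rewrite eq_sym (negbTE ji).
Qed.

Lemma count0 : \sum_(i : 'I_n) \sum_(j : 'I_n) (i != j)%:R = n%:R * (n%:R - 1) :> R.
Proof.
under eq_bigr do rewrite count1.
by rewrite sumr_const card_ord mulr_natl.
Qed.

Lemma count2 (i j : 'I_n) : i != j ->
  \sum_k \sum_l ((k != l) && ([set k; l] == [set i; j]))%:R = 2 :> R.
Proof.
move=> ij.
have e k l : ((k != l) && ([set k; l] == [set i; j]))%:R =
   ((k == i)%:R * (l == j)%:R + (k == j)%:R * (l == i)%:R :> R).
  rewrite set2_eq //; case: (boolP (k == i)) => [/eqP ->|_]; rewrite ?(negbTE ij) /=.
    by rewrite orbF mul1r mul0r addr0.
  by rewrite mul0r add0r -natrM mulnb.
under eq_bigr => k _ do under eq_bigr => l _ do rewrite e.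
under eq_bigr => k _ do rewrite big_split /= -!mulr_sumr.
rewrite big_split /= -!mulr_suml.
have s1 (a : 'I_n) : \sum_(l < n) (l == a)%:R = 1 :> R.
  by rewrite (bigD1 a) //= eqxx big1 ?addr0 // => l /negbTE ->.
by rewrite !s1 !mulr1.
Qed.

Lemma sum_eq1 (a : 'I_n) : \sum_(l < n) (l == a)%:R = 1 :> R.
Proof. by rewrite (bigD1 a) //= eqxx big1 ?addr0 // => l /negbTE ->. Qed.

Lemma sum_lin (I : finType) (c d : R) (f : I -> R) :
  \sum_i (c * f i * d) = c * (\sum_i f i) * d.
Proof. by rewrite mulr_sumr mulr_suml. Qed.

Lemma M1 (i j : 'I_n) : \sum_E w E * (adj E i j)%:R = (i != j)%:R * p.
Proof.
have := M2 i j i j; rewrite eqxx bnat => <-.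
by apply: eq_bigr => E _; rewrite bnat.
Qed.

Definition Tg E := \sum_(i : 'I_n) \sum_(j : 'I_n) (adj E i j)%:R : R.
Definition Sg E := \sum_(i : 'I_n) ((\sum_(j : 'I_n) (adj E i j)%:R) ^+ 2 + \sum_(j : 'I_n) (adj E i j)%:R) : R.

Lemma ED (i : 'I_n) : \sum_E w E * \sum_j (adj E i j)%:R = (n%:R - 1) * p.
Proof. by rewrite lin; under eq_bigr do rewrite M1; rewrite -mulr_suml count1. Qed.

Lemma ET : \sum_E w E * Tg E = n%:R * (n%:R - 1) * p.
Proof.
rewrite /Tg lin; under eq_bigr do rewrite ED.
by rewrite sumr_const card_ord mulr_natl; ring.
Qed.

Lemma ES_i (i : 'I_n) : \sum_E w E * (\sum_j (adj E i j)%:R) ^+ 2 =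
  (n%:R - 1) ^+ 2 * p ^+ 2 + (p - p ^+ 2) * (n%:R - 1).
Proof.
transitivity (\sum_j \sum_k ((i != j)%:R * (i != k)%:R * p ^+ 2 +
     (p - p ^+ 2) * ((i != j) && (k == j))%:R)).
  under eq_bigr do rewrite expr2 mulr_suml.
  rewrite lin; apply: eq_bigr => j _.
  under eq_bigr do rewrite mulr_sumr.
  rewrite lin; apply: eq_bigr => k _.
  rewrite M2'; congr (_ + _ * _%:R).
  case: (boolP (i != j)) => //= ij; rewrite set2_eq // eqxx /= (negbTE ij) orbF.
  by [].
under eq_bigr => j _ do rewrite big_split /= sum_lin -mulr_sumr.
rewrite big_split /= -!mulr_suml count1 -mulr_sumr.
have -> : \sum_(j < n) \sum_(k < n) ((i != j) && (k == j))%:R = n%:R - 1 :> R.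
  rewrite -(count1 i); apply: eq_bigr => j _; case: (i != j) => /=.
    exact: sum_eq1.
  by rewrite big1.
by rewrite expr2; ring.
Qed.

Lemma ES : \sum_E w E * Sg E =
  n%:R * ((n%:R - 1) ^+ 2 * p ^+ 2 + (p - p ^+ 2) * (n%:R - 1) + (n%:R - 1) * p).
Proof.
have h (i : 'I_n) : \sum_E w E * ((\sum_j (adj E i j)%:R) ^+ 2 + \sum_j (adj E i j)%:R) =
    (n%:R - 1) ^+ 2 * p ^+ 2 + (p - p ^+ 2) * (n%:R - 1) + (n%:R - 1) * p.
  by under eq_bigr do rewrite mulrDr; rewrite big_split /= ES_i ED.
rewrite /Sg lin; under eq_bigr do rewrite h.
by rewrite sumr_const card_ord mulr_natl.
Qed.

Lemma ET2 : \sum_E w E * Tg E ^+ 2 =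
  (n%:R * (n%:R - 1)) ^+ 2 * p ^+ 2 + (p - p ^+ 2) * 2 * (n%:R * (n%:R - 1)).
Proof.
pose c (x : 'I_n * 'I_n) := (x.1 != x.2)%:R : R.
have N : \sum_x c x = n%:R * (n%:R - 1) by rewrite -count0 pair_bigA.
have TE E : Tg E = \sum_(x : 'I_n * 'I_n) (adj E x.1 x.2)%:R by rewrite /Tg pair_bigA.
transitivity (\sum_(x : 'I_n * 'I_n) \sum_(y : 'I_n * 'I_n) (c x * c y * p ^+ 2 +
   (p - p ^+ 2) * ((x.1 != x.2) && ((y.1 != y.2) && ([set y.1; y.2] == [set x.1; x.2])))%:R)).
  under eq_bigr do rewrite TE expr2 mulr_suml.
  rewrite lin; apply: eq_bigr => x _.
  under eq_bigr do rewrite mulr_sumr.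
  by rewrite lin; apply: eq_bigr => y _; rewrite M2'.
under eq_bigr => x _ do rewrite big_split /= sum_lin -mulr_sumr.
rewrite big_split /= -!mulr_suml N -mulr_sumr.
have -> : \sum_(x : 'I_n * 'I_n) \sum_(y : 'I_n * 'I_n) ((x.1 != x.2) && ((y.1 != y.2) &&
     ([set y.1; y.2] == [set x.1; x.2])))%:R = 2 * (n%:R * (n%:R - 1)) :> R.
  rewrite -N mulr_sumr; apply: eq_bigr => x _; rewrite /c.
  case: (boolP (x.1 != x.2)) => /= ne.
    by rewrite -(pair_bigA _ (fun k l => ((k != l) && ([set k; l] == [set x.1; x.2]))%:R)) count2 // mulr1.
  by rewrite big1 ?mulr0.
by rewrite expr2; ring.
Qed.
End Prob.

Lemma jensen (R : realType) (I : finType) (w f : I -> R) :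
  (forall i, 0 <= w i) -> \sum_i w i = 1 ->
  (\sum_i w i * f i) ^+ 2 <= \sum_i w i * f i ^+ 2.
Proof.
move=> w0 w1; set mu := \sum_i w i * f i.
have : 0 <= \sum_i w i * (f i - mu) ^+ 2.
  by apply: sumr_ge0 => i _; apply: mulr_ge0 => //; apply: sqr_ge0.
have -> : \sum_i w i * (f i - mu) ^+ 2 =
    \sum_i w i * f i ^+ 2 + (- 2 * mu) * mu + mu ^+ 2 * \sum_i w i.
  transitivity (\sum_i (w i * f i ^+ 2 + (- 2 * mu) * (w i * f i) + mu ^+ 2 * w i)).
    by apply: eq_bigr => i _; ring.
  by rewrite !big_split /= -!mulr_sumr.
rewrite w1; lra.
Qed.

Local Notation TT E := (@Tg _ _ E).
Local Notation SS E := (@Sg _ _ E).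

Lemma per_graph (R : realType) k (E : {set {set 'I_k.+2}}) :
  let K := (k.+1)%:R : R in let lam := @alg_conn R k.+2 E in
  [/\ 0 <= lam, K * lam <= TT E &
      (TT E - K * lam) ^+ 2 <= K * (K * SS E - TT E ^+ 2)].
Proof.
move=> K lam.
have [sz srt s0 pos [sT sS]] := @spec_props R k.+2 E isT.
have := seq_ineq sz srt s0 pos.
rewrite sT sS lap_trace lap_trace2.
by [].
Qed.

Unset Implicit Arguments.

Theorem lemma7 (R : realType) (n : nat) (p : R) :
  (2 <= n)%N -> 0 < p < 1 ->
  let q := 1 - p in
  Num.max (n%:R * p - Num.sqrt (2 * n%:R * (n%:R - 2) * p * q)) 0
    <= gnp_expect p (@alg_conn R n)
  /\ gnp_expect p (@alg_conn R n) <= n%:R * p.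
Proof.
case: n => [|[|k]] // _ /andP [p0 p1] q.
set K := (k.+1)%:R : R.
have nE : (k.+2)%:R = K + 1 :> R by rewrite /K -natr1.
have pp : 0 <= p <= 1 by rewrite !ltW.
set w := @gnp_prob R k.+2 p.
have w0 E : 0 <= w E by apply: w_ge0.
have w1 : \sum_E w E = 1 by apply: w_sum1.
have ET := @ET R k.+2 p; have ES := @ES R k.+2 p; have ET2 := @ET2 R k.+2 p.
rewrite -/w nE in ET ES ET2.
set lam := @alg_conn R k.+2.
have EL : gnp_expect p lam = \sum_E w E * lam E by [].
rewrite EL nE.
set mu := \sum_E w E * lam E.
have Kp : 0 < K by rewrite /K ltr0n.
have KmuT : K * mu <= K * (K + 1) * p.
  have ETs : \sum_E w E * TT E = K * (K + 1) * p by rewrite ET; ring.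
  rewrite -ETs /mu mulr_sumr; apply: ler_sum => E _.
  have [_ h _] := @per_graph R k E; rewrite -/K -/lam in h.
  by rewrite mulrCA; apply: ler_wpM2l.
have up : mu <= (K + 1) * p.
  by rewrite -(ler_pM2l Kp) mulrA.
split => //.
rewrite ge_max; apply/andP; split; last first.
  by apply: sumr_ge0 => E _; apply: mulr_ge0 => //; have [] := @per_graph R k E.
set X := fun E => TT E - K * lam E.
have EX : \sum_E w E * X E = K * ((K + 1) * p - mu).
  rewrite /X; under eq_bigr do rewrite mulrBr.
  rewrite sumrB ET.
  have -> : \sum_E w E * (K * lam E) = K * mu.
    by rewrite /mu mulr_sumr; apply: eq_bigr => E _; ring.
  ring.
have EX2 : \sum_E w E * X E ^+ 2 <= K ^+ 2 * (2 * (K + 1) * (K + 1 - 2) * p * q).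
  apply: (@le_trans _ _ (\sum_E w E * (K * (K * SS E - TT E ^+ 2)))).
    apply: ler_sum => E _; apply: ler_wpM2l => //.
    by have [_ _ h] := @per_graph R k E.
  have -> : \sum_E w E * (K * (K * SS E - TT E ^+ 2)) =
     K * (K * (\sum_E w E * SS E) - \sum_E w E * TT E ^+ 2).
    rewrite [K * \sum_E _]mulr_sumr -sumrB mulr_sumr; apply: eq_bigr => E _; ring.
  rewrite ES ET2 /q le_eqVlt; apply/orP; left; apply/eqP; ring.
have J := @jensen R _ w X w0 w1.
set a2 := 2 * (K + 1) * (K + 1 - 2) * p * q in EX2 *.
have h : ((K + 1) * p - mu) ^+ 2 <= a2.
  have K2 : 0 < K ^+ 2 by rewrite exprn_gt0.
  rewrite -(ler_pM2l K2) -exprMn -EX.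
  exact: le_trans J EX2.
have h2 : (K + 1) * p - mu <= Num.sqrt a2.
  apply: (le_trans (ler_norm _)); rewrite -sqrtr_sqr; exact: ler_wsqrtr.
lra.
Qed.
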